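(* Let $X,Y$ be sets and let $G\subseteq X\times Y$ be a connected bipartite graph. Let $\mathcal F(G)$ be the set of finite, connected, twin-free induced subgraphs of $G$. If $\mathcal F(G)$ contains only finitely many pairwise non-isomorphic bipartite graphs, then $\operatorname{tf}(G)$ is finite.
   Context: A subset $G\subseteq X\times Y$ is viewed as a bipartite graph with vertex set the disjoint union of $X$ and $Y$ and edge set $G$. For $X_0\subseteq X$, $Y_0\subseteq Y$, the induced subgraph is $G[X_0,Y_0]=G\cap(X_0\times Y_0)$ (with vertex set $X_0\sqcup Y_0$). Two vertices are twins if they have the same set of neighbours; a graph is twin-free if no two distinct vertices are twins. $\operatorname{tf}(G)$ denotes a maximal twin-free induced subgraph of $G$, obtained by choosing one vertex from each twin-equivalence class; it is unique up to isomorphism. Isomorphisms of bipartite graphs are bijections of vertex sets preserving edges and mapping the two sides onto the two sides (possibly swapping them). *)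

(* Defs.v *)
(* A bipartite graph G ⊆ X × Y is a relation G : X -> Y -> Prop;
   its vertex set is the disjoint union X + Y. Vertex subsets (induced
   subgraphs G[X0,Y0]) are predicates on X + Y. *)
From Stdlib Require Import List Relations.
Set Implicit Arguments.

Section Defs.
Variables (X Y : Type) (G : X -> Y -> Prop).

Definition adj (u v : X + Y) : Prop :=
  match u, v with
  | inl x, inr y => G x y
  | inr y, inl x => G x y
  | _, _ => False
  end.

Definition restr_adj (S : X + Y -> Prop) (u v : X + Y) : Prop :=
  S u /\ S v /\ adj u v.

Definition connected_on (S : X + Y -> Prop) : Prop :=
  forall u v, S u -> S v -> clos_refl_trans (X + Y) (restr_adj S) u v.

Definition connected : Prop := connected_on (fun _ => True).

Definition twins_in (S : X + Y -> Prop) (u v : X + Y) : Prop :=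
  forall w, S w -> (adj u w <-> adj v w).

Definition twin_free_on (S : X + Y -> Prop) : Prop :=
  forall u v, S u -> S v -> twins_in S u v -> u = v.

Definition finite_set (S : X + Y -> Prop) : Prop :=
  exists l : list (X + Y), forall v, S v -> In v l.

Definition in_F (S : X + Y -> Prop) : Prop :=
  finite_set S /\ connected_on S /\ twin_free_on S.

Definition same_side (u v : X + Y) : Prop :=
  match u, v with
  | inl _, inl _ => True
  | inr _, inr _ => True
  | _, _ => False
  end.

Definition bip_iso (S T : X + Y -> Prop) (f : X + Y -> X + Y) : Prop :=
  (forall v, S v -> T (f v)) /\
  (forall u v, S u -> S v -> f u = f v -> u = v) /\
  (forall w, T w -> exists v, S v /\ f v = w) /\
  (forall u v, S u -> S v -> (adj u v <-> adj (f u) (f v))) /\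
  ((forall v, S v -> same_side v (f v)) \/
   (forall v, S v -> ~ same_side v (f v))).

Definition isomorphic (S T : X + Y -> Prop) : Prop :=
  exists f, bip_iso S T f.

(* S is the vertex set of a tf(G): it contains exactly one vertex from each
   twin-equivalence class of G *)
Definition is_tf_set (S : X + Y -> Prop) : Prop :=
  (forall v, exists u, S u /\ twins_in (fun _ => True) u v) /\
  (forall u v, S u -> S v -> twins_in (fun _ => True) u v -> u = v).

End Defs.

(* Main.v *)
Require Import Defs.
From Stdlib Require Import List Relations Classical Lia.
Import ListNotations.

Lemma adj_sym {X Y} (G : X -> Y -> Prop) u v : adj G u v -> adj G v u.
Proof. destruct u, v; simpl; auto. Qed.

Lemma crt_mono {X Y} (G : X -> Y -> Prop) (S S' : X + Y -> Prop) u v :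
  (forall x, S x -> S' x) ->
  clos_refl_trans _ (restr_adj G S) u v -> clos_refl_trans _ (restr_adj G S') u v.
Proof.
  intros H Hc; induction Hc.
  - apply rt_step. destruct H0 as [? [? ?]]. repeat split; auto.
  - apply rt_refl.
  - eapply rt_trans; eauto.
Qed.

Lemma conn_union {X Y} (G : X -> Y -> Prop) (l1 l2 : list (X+Y)) x :
  connected_on G (fun v => In v l1) -> connected_on G (fun v => In v l2) ->
  In x l1 -> In x l2 -> connected_on G (fun v => In v (l1 ++ l2)).
Proof.
  intros H1 H2 Hx1 Hx2 u v Hu Hv.
  apply in_app_or in Hu; apply in_app_or in Hv.
  assert (M1 : forall a b, In a l1 -> In b l1 -> clos_refl_trans _ (restr_adj G (fun v => In v (l1++l2))) a b).
  { intros a b Ha Hb. eapply crt_mono; [|apply H1; auto]. intros; apply in_or_app; auto. }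
  assert (M2 : forall a b, In a l2 -> In b l2 -> clos_refl_trans _ (restr_adj G (fun v => In v (l1++l2))) a b).
  { intros a b Ha Hb. eapply crt_mono; [|apply H2; auto]. intros; apply in_or_app; auto. }
  destruct Hu, Hv; eauto.
  - eapply rt_trans; [apply (M1 u x)|apply (M2 x v)]; auto.
  - eapply rt_trans; [apply (M2 u x)|apply (M1 x v)]; auto.
Qed.

Lemma path_list {X Y} (G : X -> Y -> Prop) u v :
  clos_refl_trans _ (restr_adj G (fun _ => True)) u v ->
  exists lp, In u lp /\ In v lp /\ connected_on G (fun w => In w lp).
Proof.
  intros H; induction H.
  - exists [x; y]. split; [simpl; auto|split; [simpl; auto|]].
    destruct H as [_ [_ Ha]].
    intros a b Ha' Hb'. simpl in Ha', Hb'.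
    destruct Ha' as [<-|[<-|[]]]; destruct Hb' as [<-|[<-|[]]].
    + apply rt_refl.
    + apply rt_step. split; [simpl; auto| split; [simpl; auto| auto]].
    + apply rt_step. split; [simpl; auto| split; [simpl; auto| apply adj_sym; auto]].
    + apply rt_refl.
  - exists [x]. split; [simpl; auto| split; [simpl;auto|]].
    intros a b Ha Hb; simpl in *. destruct Ha as [<-|[]]; destruct Hb as [<-|[]]; apply rt_refl.
  - destruct IHclos_refl_trans1 as [l1 [? [? ?]]].
    destruct IHclos_refl_trans2 as [l2 [? [? ?]]].
    exists (l1 ++ l2). split; [apply in_or_app; auto| split; [apply in_or_app; auto|]].
    eapply conn_union; eauto.
Qed.

Lemma build_conn {X Y} (G : X -> Y -> Prop) x0 (B : list (X+Y)) :
  connected G ->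
  exists lc, In x0 lc /\ (forall b, In b B -> In b lc) /\ connected_on G (fun v => In v lc).
Proof.
  intros HG. induction B as [|b B IH].
  - exists [x0]. split; [simpl; auto| split; [intros _ []|]].
    intros a c Ha Hc; simpl in *. destruct Ha as [<-|[]]; destruct Hc as [<-|[]]; apply rt_refl.
  - destruct IH as [lc [H0 [HB Hc]]].
    destruct (path_list G x0 b (HG x0 b I I)) as [lp [Hx [Hb Hp]]].
    exists (lc ++ lp). split; [apply in_or_app; auto|split].
    + intros b' [<-|Hb']; apply in_or_app; auto.
    + eapply conn_union; eauto.
Qed.

Lemma choose_list {A B : Type} (D : A -> B -> Prop) (ps : list A) :
  (forall p, In p ps -> exists w, D p w) ->
  exists lw, forall p, In p ps -> exists w, In w lw /\ D p w.
Proof.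
  induction ps as [|p ps IH]; intros H.
  - exists nil. intros _ [].
  - destruct (H p (or_introl eq_refl)) as [w Hw].
    destruct IH as [lw Hlw]. { intros; apply H; simpl; auto. }
    exists (w :: lw). intros q [<-|Hq].
    + exists w; simpl; auto.
    + destruct (Hlw q Hq) as [w' [? ?]]. exists w'; simpl; auto.
Qed.

Lemma reps {T : Type} (E : T -> T -> Prop) (l : list T) :
  (forall x, E x x) -> (forall x y, E x y -> E y x) ->
  exists r, (forall y, In y r -> In y l) /\ (forall x, In x l -> exists y, In y r /\ E x y) /\
    (forall y1 y2, In y1 r -> In y2 r -> E y1 y2 -> y1 = y2).
Proof.
  intros Hrf Hs. induction l as [|a l IH].
  - exists nil. repeat split; intros; contradiction.
  - destruct IH as [r [H1 [H2 H3]]].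
    destruct (classic (exists y, In y r /\ E a y)) as [[y [Hy Ey]]|Hn].
    + exists r. split; [intros; simpl; auto|split; auto].
      intros x [<-|Hx]; eauto.
    + exists (a :: r). split; [intros y [<-|Hy]; simpl; auto|split].
      * intros x [<-|Hx]; [exists a; simpl; auto|].
        destruct (H2 x Hx) as [y [? ?]]; exists y; simpl; auto.
      * intros y1 y2 [<-|Hy1] [<-|Hy2] E12; auto.
        -- exfalso; apply Hn; eauto.
        -- exfalso; apply Hn; eauto.
Qed.

Lemma count_reps {T} (E : T -> T -> Prop) (P : T -> Prop) (A : list T) :
  (forall x y, E x y -> E y x) -> (forall x y z, E x y -> E y z -> E x z) ->
  (forall a, In a A -> exists y, P y /\ E a y) ->
  (forall a b, In a A -> In b A -> E a b -> a = b) ->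
  NoDup A ->
  exists R, length R = length A /\ NoDup R /\ (forall y, In y R -> P y) /\
    (forall y, In y R -> exists a, In a A /\ E a y).
Proof.
  intros Hs Ht. induction A as [|a A IH]; intros Hr Hd Hnd.
  - exists nil; simpl; split; [reflexivity|split; [constructor|split; intros _ []]].
  - inversion Hnd as [|? ? Hna HndA]; subst.
    destruct IH as [R [HL [HN [HP HE]]]].
    + intros; apply Hr; simpl; auto.
    + intros; apply Hd; simpl; auto.
    + auto.
    + destruct (Hr a (or_introl eq_refl)) as [y [Py Ey]].
      exists (y :: R). simpl. split; [congruence|split;[|split]].
      * constructor; auto. intros Hy. destruct (HE y Hy) as [a' [Ha' Ea']].
        assert (a = a') as <-. { apply Hd; simpl; auto. eapply Ht; [apply Ey| apply Hs; auto]. }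
        contradiction.
      * intros y' [<-|Hy']; auto.
      * intros y' [<-|Hy']; [exists a; auto| destruct (HE y' Hy') as [a' [? ?]]; exists a'; auto].
Qed.

Lemma bound_L {X Y} (G : X -> Y -> Prop) (L : list (X+Y -> Prop)) :
  Forall (in_F G) L ->
  exists N, forall T, In T L -> forall l, NoDup l -> (forall x, In x l -> T x) -> length l <= N.
Proof.
  induction L as [|T L IH]; intros HF.
  - exists 0. intros _ [].
  - inversion HF as [|? ? [[lT HlT] _] HF']; subst.
    destruct (IH HF') as [N HN].
    exists (length lT + N). intros T' [<-|HT'] l Hl Hin.
    + assert (length l <= length lT) by (apply NoDup_incl_length; auto; intros x Hx; apply HlT, Hin, Hx). lia.
    + specialize (HN T' HT' l Hl Hin). lia.
Qed.

Lemma infinite_lists {X Y} (S : X+Y -> Prop) : ~ finite_set S ->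
  forall n, exists l, length l = n /\ NoDup l /\ (forall x, In x l -> S x).
Proof.
  intros Hinf n; induction n as [|n [l [Hl [Hn Hs]]]].
  - exists nil; repeat split; [constructor | intros _ []].
  - assert (exists v, S v /\ ~ In v l) as [v [Sv Hv]].
    { apply NNPP; intros Hne. apply Hinf. exists l. intros v Sv. apply NNPP; intros Hv. apply Hne; eauto. }
    exists (v :: l); simpl; repeat split; auto. constructor; auto. intros x [<-|Hx]; auto.
Qed.

Lemma big_F {X Y} (G : X -> Y -> Prop) (S : X + Y -> Prop) :
  connected G -> is_tf_set G S -> forall A, A <> nil -> NoDup A -> (forall x, In x A -> S x) ->
  exists T R, in_F G T /\ length R = length A /\ NoDup R /\ (forall y, In y R -> T y).
Proof.
  intros HG [_ HS] A HA HnA HsA.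
  destruct A as [|x0 A']; [congruence|].
  set (A := x0 :: A') in *.
  set (D := fun (p : (X+Y)*(X+Y)) w => fst p = snd p \/ ~(adj G (fst p) w <-> adj G (snd p) w)).
  destruct (choose_list D (list_prod A A)) as [lw Hlw].
  { intros [a b] Hp. apply in_prod_iff in Hp. destruct Hp as [Ha Hb].
    destruct (classic (twins_in G (fun _ => True) a b)) as [Ht|Ht].
    - exists a. left. simpl. apply HS; auto.
    - apply NNPP; intro Hn; apply Ht; intros w _; apply NNPP; intro Hw; apply Hn; exists w; right; auto. }
  destruct (build_conn G x0 (A ++ lw) HG) as [lc [_ [HB Hc]]].
  set (C := fun v => In v lc).
  set (E := twins_in G C).
  assert (Erf : forall x, E x x) by (intros x w _; tauto).
  assert (Esym : forall x y, E x y -> E y x) by (intros x y H w Hw; specialize (H w Hw); tauto).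
  assert (Etr : forall x y z, E x y -> E y z -> E x z)
    by (intros x y z H1 H2 w Hw; specialize (H1 w Hw); specialize (H2 w Hw); tauto).
  destruct (reps E lc Erf Esym) as [r [Hsub [Hrep Huniq]]].
  set (T := fun v => In v r).
  destruct (count_reps E T A Esym Etr) as [R [HlR [HnR [HRT _]]]]; auto.
  { intros a Ha. apply Hrep. apply HB, in_or_app; auto. }
  { intros a b Ha Hb Eab. destruct (Hlw (a, b) (in_prod A A a b Ha Hb)) as [w [Hw [Hd|Hd]]].
    - exact Hd.
    - exfalso. apply Hd. apply Eab. unfold C. apply HB, in_or_app; auto. }
  exists T, R. split; [|auto].
  split; [exists r; auto|split].
  - assert (Hpath : forall x y, clos_refl_trans_1n _ (restr_adj G C) x y ->
       forall x' y', In x' r -> In y' r -> E x x' -> E y y' -> clos_refl_trans _ (restr_adj G T) x' y').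
    { intros x y H; induction H as [x|x z y Hxz Hzy IH]; intros x' y' Hx' Hy' Ex Ey.
      - assert (x' = y') as <-. { apply Huniq; auto. eapply Etr; [apply Esym, Ex| exact Ey]. }
        apply rt_refl.
      - destruct Hxz as [Cx [Cz Axz]].
        destruct (Hrep z Cz) as [z' [Hz' Ez]].
        eapply rt_trans; [|apply (IH z' y'); auto].
        apply rt_step. split; [exact Hx'|split; [exact Hz'|]].
        apply adj_sym. apply (proj1 (Ez x' (Hsub x' Hx'))).
        apply adj_sym. apply (proj1 (Ex z Cz)). exact Axz. }
    intros u v Hu Hv. apply (Hpath u v); auto.
    apply clos_rt_rt1n. apply Hc; apply Hsub; auto.
  - intros u v Hu Hv Htw. apply Huniq; auto.
    intros w Cw. destruct (Hrep w Cw) as [w' [Hw' Ew]].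
    pose proof (Htw w' Hw') as H1.
    pose proof (Ew u (Hsub u Hu)) as H2.
    pose proof (Ew v (Hsub v Hv)) as H3.
    pose proof (adj_sym G u w). pose proof (adj_sym G w u).
    pose proof (adj_sym G v w). pose proof (adj_sym G w v).
    pose proof (adj_sym G u w'). pose proof (adj_sym G w' u).
    pose proof (adj_sym G v w'). pose proof (adj_sym G w' v).
    tauto.
Qed.

Theorem lemma2p5 (X Y : Type) (G : X -> Y -> Prop) :
  connected G ->
  (exists L : list (X + Y -> Prop),
      Forall (in_F G) L /\
      (forall S, in_F G S -> exists T, In T L /\ isomorphic G S T)) ->
  forall S, is_tf_set G S -> finite_set S.
Proof.
  intros HG [L [HL Hiso]] S0 HS.
  destruct (bound_L G L HL) as [N HN].
  apply NNPP; intros Hinf.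
  destruct (infinite_lists S0 Hinf (N + 1)) as [A [HlA [HnA HsA]]].
  destruct (big_F G S0 HG HS A) as [T [R [HT [HlR [HnR HRT]]]]]; auto.
  { destruct A; simpl in HlA; [lia|discriminate]. }
  destruct (Hiso T HT) as [T' [HT' [f [Hmap [Hinj _]]]]].
  assert (Hle : length (map f R) <= N).
  { apply (HN T' HT').
    - apply NoDup_map_NoDup_ForallPairs; auto. intros a b Ha Hb; apply Hinj; auto.
    - intros x Hx. apply in_map_iff in Hx. destruct Hx as [y [<- Hy]]. apply Hmap; auto. }
  rewrite length_map in Hle. lia.
Qed.
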